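(* Let $C\subset\mathbb R^3$ be a non-closed embedded curve of length $l>0$ with nowhere vanishing curvature and orientation-compatible arc-length parametrization $\mathbf c:[-l/2,l/2]\to\mathbb R^3$, and let $F\in\mathcal D_*(C)$ be a normal form with $F(s,0)=\mathbf c(s)$. Then at each point of $C$ the ruling direction of the inverse $F_*$ is linearly independent of that of $F$, i.e. $\xi_F(s)$ and $\xi_{F_*}(-s)$ are linearly independent for every $s$. In particular, $F(\Omega_\epsilon)\cap F_*(\Omega_\epsilon)=C$ for all sufficiently small $\epsilon>0$.
   Context: $-C$ is $C$ with the opposite orientation; $\kappa$ is the curvature of $\mathbf c$; $\Omega_\epsilon:=[-l/2,l/2]\times(-\epsilon,\epsilon)$. A developable strip along $C$ is the germ of a $C^\infty$ embedding $f(u,v)=f(u,0)+v\,\xi_f(u)$ with $\mathbf c_f(u)=f(u,0)$ parametrizing $C$, $\xi_f$ unit (the ruling vector field), and zero Gaussian curvature; with the Frenet frame $(\mathbf e,\mathbf n,\mathbf b)$ of $\mathbf c_f$ write $\xi_f=\cos\beta_f\,\mathbf e+\sin\beta_f(\cos\alpha_f\,\mathbf n+\sin\alpha_f\,\mathbf b)$. $\mathcal D(C)$: strips with $\mathbf c_f$ inducing the orientation of $C$ and $0<|\cos\alpha_f|<1$, normalized by $0<|\alpha_f|<\pi/2$ (first angular function), $0<\beta_f<\pi$. Geodesic curvature $\mu_f=\kappa_f\cos\alpha_f$; admissible ($\in\mathcal D_*(C)$) if $\mu_f<\min\kappa_f$ everywhere. A normal form is such a strip $F(s,v)$ defined near $[-l/2,l/2]\times\{0\}$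 with $s\mapsto F(s,0)$ an arc-length parametrization of $C$ (either orientation); it is determined by that parametrization and its first angular function, which can be any smooth function into $(-\pi/2,\pi/2)\setminus\{0\}$. Inverse: $F_*\in\mathcal D_*(-C)$ is the normal form with $F_*(s,0)=\mathbf c(-s)$ whose first angular function (w.r.t. the Frenet frame of $s\mapsto\mathbf c(-s)$) has the same sign as $\alpha_F(s)$ and satisfies $\kappa(-s)\cos\alpha_{F_*}(s)=\kappa(s)\cos\alpha_F(s)$. *)

(* Defs.v *)
From HB Require Import structures.
From mathcomp Require Import all_boot all_order all_algebra.
From mathcomp Require Import all_classical all_reals all_analysis.
Set Implicit Arguments. Unset Strict Implicit. Unset Printing Implicit Defensive.
Import Order.TTheory GRing.Theory Num.Theory.
Import numFieldNormedType.Exports.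
Local Open Scope classical_set_scope.
Local Open Scope ring_scope.

Section Defs.
Variable R : realType.
Notation vec := 'rV[R]_3.

Definition i0 : 'I_3 := inord 0.
Definition i1 : 'I_3 := inord 1.
Definition i2 : 'I_3 := inord 2.

Definition dot (u v : vec) : R := \sum_(i < 3) u ord0 i * v ord0 i.
Definition vnorm (u : vec) : R := Num.sqrt (dot u u).
Definition cross (u v : vec) : vec :=
  \row_(k < 3)
    (if (k : nat) == 0%N then u ord0 i1 * v ord0 i2 - u ord0 i2 * v ord0 i1
     else if (k : nat) == 1%N then u ord0 i2 * v ord0 i0 - u ord0 i0 * v ord0 i2
     else u ord0 i0 * v ord0 i1 - u ord0 i1 * v ord0 i0).

(* C^infinity on a set P (used with P open) *)
Definition smooth_on (V : normedModType R) (P : set R) (f : R -> V) :=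
  forall (n : nat) (x : R), P x -> derivable (derive1n n f) x 1.

Definition tangent (c : R -> vec) (s : R) : vec := derive1 c s.
Definition curvature (c : R -> vec) (s : R) : R := vnorm (derive1n 2 c s).
Definition principal_normal (c : R -> vec) (s : R) : vec :=
  (curvature c s)^-1 *: derive1n 2 c s.
Definition binormal (c : R -> vec) (s : R) : vec :=
  cross (tangent c s) (principal_normal c s).

Definition ruling_from (c : R -> vec) (a b : R) (s : R) : vec :=
  cos b *: tangent c s
  + sin b *: (cos a *: principal_normal c s + sin a *: binormal c s).

Definition strip (c xi : R -> vec) (u v : R) : vec := c u + v *: xi u.

Definition pu (f : R -> R -> vec) u v : vec := derive1 (fun x => f x v) u.
Definition pv (f : R -> R -> vec) u v : vec := derive1 (f u) v.
Definition gauss_curv (f : R -> R -> vec) (u v : R) : R :=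
  let fu := pu f u v in let fv := pv f u v in
  let fuu := pu (pu f) u v in let fuv := pv (pu f) u v in
  let fvv := pv (pv f) u v in
  let nu := (vnorm (cross fu fv))^-1 *: cross fu fv in
  let E := dot fu fu in let F := dot fu fv in let G := dot fv fv in
  let L := dot fuu nu in let M := dot fuv nu in let N := dot fvv nu in
  (L * N - M ^+ 2) / (E * G - F ^+ 2).

Definition Omega (l eps : R) : set (R * R) :=
  [set p | `|p.1| <= l / 2 /\ `|p.2| < eps].

(* f is (the germ of) an embedding along [-l/2,l/2] x {0}: an injective
   immersion on some Omega_eps *)
Definition embedded_germ (l : R) (f : R -> R -> vec) :=
  exists2 eps : R, 0 < eps &
    (forall p q, Omega l eps p -> Omega l eps q -> f p.1 p.2 = f q.1 q.2 -> p = q)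
    /\ (forall p, Omega l eps p ->
          row_free (col_mx (pu f p.1 p.2) (pv f p.1 p.2))).

(* Normal form: c arc-length parametrization (defined on |s| < l/2 + d),
   xi = ruling vector field with first angular function a and second angular
   function b, F(s,v) = c(s) + v xi(s) a developable (K = 0) embedded strip. *)
Definition normal_form (l d : R) (c xi : R -> vec) (a b : R -> R) :=
  [/\ smooth_on [set s | `|s| < l / 2 + d] xi,
      (forall s, `|s| < l / 2 + d ->
         [/\ 0 < `|a s| < pi / 2, 0 < b s < pi & xi s = ruling_from c (a s) (b s) s]),
      (exists2 eps : R, 0 < eps & forall s v, `|s| < l / 2 + d -> `|v| < eps ->
          gauss_curv (strip c xi) s v = 0)
    & embedded_germ l (strip c xi)].

End Defs.

(* Main.v *)
Require Import Defs.
From HB Require Import structures.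
From mathcomp Require Import all_boot all_order all_algebra.
From mathcomp Require Import all_classical all_reals all_analysis.
Import Order.TTheory GRing.Theory Num.Theory.
Import numFieldNormedType.Exports.
Local Open Scope classical_set_scope.
Local Open Scope ring_scope.
From mathcomp Require Import ring lra.
Set Implicit Arguments. Unset Strict Implicit. Unset Printing Implicit Defensive.


Section Alg.
Variable R : realType.
Notation vec := 'rV[R]_3.

Lemma sum3 (F : 'I_3 -> R) : \sum_(i < 3) F i = F i0 + F i1 + F i2.
Proof.
rewrite !big_ord_recr big_ord0 /= add0r.
have -> : i0 = (widen_ord (leqnSn 2) (widen_ord (leqnSn 1) ord_max)) by apply/val_inj; rewrite /= inordK.
have -> : i1 = (widen_ord (leqnSn 2) ord_max) by apply/val_inj; rewrite /= inordK.
have -> : i2 = ord_max by apply/val_inj; rewrite /= inordK.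
by [].
Qed.

Lemma dotE (u v : vec) : dot u v =
  u ord0 i0 * v ord0 i0 + u ord0 i1 * v ord0 i1 + u ord0 i2 * v ord0 i2.
Proof. by rewrite /dot sum3. Qed.

Lemma cross0 (u v : vec) : cross u v ord0 i0 = u ord0 i1 * v ord0 i2 - u ord0 i2 * v ord0 i1.
Proof. by rewrite /cross mxE inordK. Qed.
Lemma cross1 (u v : vec) : cross u v ord0 i1 = u ord0 i2 * v ord0 i0 - u ord0 i0 * v ord0 i2.
Proof. by rewrite /cross mxE inordK. Qed.
Lemma cross2 (u v : vec) : cross u v ord0 i2 = u ord0 i0 * v ord0 i1 - u ord0 i1 * v ord0 i0.
Proof. by rewrite /cross mxE inordK. Qed.

Lemma ord3_cases (k : 'I_3) : k = i0 \/ k = i1 \/ k = i2.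
Proof.
case: k => [[|[|[|k]]] Hk].
- by left; apply/val_inj; rewrite /= inordK.
- by right; left; apply/val_inj; rewrite /= inordK.
- by right; right; apply/val_inj; rewrite /= inordK.
- by [].
Qed.

Lemma vecP (u v : vec) : u ord0 i0 = v ord0 i0 -> u ord0 i1 = v ord0 i1 ->
  u ord0 i2 = v ord0 i2 -> u = v.
Proof.
move=> h0 h1 h2; apply/rowP => k.
by case: (ord3_cases k) => [->|[->|->]].
Qed.

Definition comb (a b g : R) (e n B : vec) : vec := a *: e + b *: n + g *: B.

Lemma combE a b g e n B k : comb a b g e n B ord0 k = a * e ord0 k + b * n ord0 k + g * B ord0 k.
Proof. by rewrite /comb !mxE. Qed.

Lemma frame_dot (e n : vec) a b g a' b' g' :
  dot e e = 1 -> dot e n = 0 -> dot n n = 1 ->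
  dot (comb a b g e n (cross e n)) (comb a' b' g' e n (cross e n)) = a * a' + b * b' + g * g'.
Proof.
move=> He Hen Hn.
transitivity (a * a' * dot e e + b * b' * dot n n + g * g' * (dot e e * dot n n - dot e n ^+ 2)
   + (a * b' + b * a') * dot e n).
  rewrite !dotE !combE !cross0 !cross1 !cross2; ring.
by rewrite He Hen Hn; ring.
Qed.

Lemma frame_det (e n : vec) a b g a' b' g' :
  dot e e = 1 -> dot e n = 0 -> dot n n = 1 ->
  dot (cross e (comb a b g e n (cross e n))) (comb a' b' g' e n (cross e n)) = b * g' - g * b'.
Proof.
move=> He Hen Hn.
transitivity ((b * g' - g * b') * (dot e e * dot n n - dot e n ^+ 2)).
  rewrite !dotE !combE !cross0 !cross1 !cross2 !combE !cross0 !cross1 !cross2; ring.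
by rewrite He Hen Hn; ring.
Qed.

Lemma cross_self_dot (e u : vec) : dot (cross e u) u = 0.
Proof. rewrite !dotE !cross0 !cross1 !cross2; ring. Qed.
Lemma cross_self_dot' (e u : vec) : dot (cross e u) e = 0.
Proof. rewrite !dotE !cross0 !cross1 !cross2; ring. Qed.

End Alg.


Section Calc.
Variable R : realType.
Notation vec := 'rV[R]_3.

Lemma ordI1 (i : 'I_1) : i = ord0.
Proof. by apply/val_inj; case: i => [[]]. Qed.

Lemma vec_is_derive (f : R -> vec) (t : R) (g : 'I_3 -> R) :
  (forall i, is_derive t 1 (fun x => f x ord0 i) (g i)) -> is_derive t 1 f (\row_i g i).
Proof.
move=> H.
have hd : derivable f t 1.
  apply/derivable_mxP => i j; rewrite (ordI1 i); exact: (@ex_derive _ _ _ _ _ _ _ (H j)).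
apply: is_derive_eq; first exact: derivableP hd.
rewrite derive_mx //; apply/matrixP => i j; rewrite !mxE (ordI1 i).
exact: (@derive_val _ _ _ _ _ _ _ (H j)).
Qed.

Lemma coord_is_derive (f : R -> vec) (t : R) (i : 'I_3) :
  derivable f t 1 -> is_derive t 1 (fun x => f x ord0 i) (derive1 f t ord0 i).
Proof.
move=> hd.
have hi : derivable (fun x => f x ord0 i) t 1 by move/derivable_mxP: hd; apply.
apply: is_derive_eq; first exact: derivableP hi.
by rewrite derive1E derive_mx // mxE.
Qed.

Lemma coord_cont (f : R -> vec) (t : R) (i : 'I_3) :
  derivable f t 1 -> {for t, continuous (fun x => f x ord0 i)}.
Proof.
move=> hd; apply: differentiable_continuous; apply/derivable1_diffP.
exact: (@ex_derive _ _ _ _ _ _ _ (coord_is_derive i hd)).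
Qed.

Lemma deriv_cont (f : R -> R) (t : R) : derivable f t 1 -> {for t, continuous f}.
Proof. by move=> hd; apply: differentiable_continuous; apply/derivable1_diffP. Qed.

Lemma near_dom (r t : R) : `|t| < r -> \forall x \near t, `|x| < r.
Proof.
move=> ht; apply/nbhs_ballP; exists (r - `|t|) => /=; first by rewrite subr_gt0.
move=> x; rewrite /ball /= => hx.
have := ler_normB t (t - x); rewrite opprB addrC subrK => h.
lra.
Qed.


Lemma lip (f df : R -> R) (a b M : R) : a <= b ->
  (forall x, a <= x <= b -> is_derive x 1 f (df x)) ->
  (forall x, a <= x <= b -> `|df x| <= M) ->
  `|f b - f a| <= M * (b - a).
Proof.
move=> ab hd hM.
have hc : {within `[a, b], continuous f}.
  apply: derivable_within_continuous => x; rewrite in_itv /= => hx.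
  exact: (@ex_derive _ _ _ _ _ _ _ (hd x hx)).
have [x /andP[] hx1 hx2 ->] : exists2 x, x \in `[a, b] & f b - f a = df x * (b - a).
  apply: MVT_segment => // x; rewrite in_itv /= => /andP[h1 h2].
  by apply: hd; rewrite !ltW.
have hx : a <= x <= b by apply/andP; split; move: hx1 hx2; rewrite ?in_itv /= => //.
rewrite normrM (ger0_norm (_ : 0 <= b - a)); last by rewrite subr_ge0.
by apply: ler_wpM2r; [rewrite subr_ge0 | exact: hM].
Qed.

Lemma lip2 (f df : R -> R) (a b M : R) :
  (forall x, Num.min a b <= x <= Num.max a b -> is_derive x 1 f (df x)) ->
  (forall x, Num.min a b <= x <= Num.max a b -> `|df x| <= M) ->
  `|f b - f a| <= M * `|b - a|.
Proof.
move=> hd hM; case: (leP a b) => ab.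
- have := @lip f df a b M ab.
  rewrite (ger0_norm (_ : 0 <= b - a)); last by rewrite subr_ge0.
  apply.
  + by move=> x hx; apply: hd; rewrite ge_min le_max; move/andP: hx => [-> ->]; rewrite ?orbT.
  + by move=> x hx; apply: hM; rewrite ge_min le_max; move/andP: hx => [-> ->]; rewrite ?orbT.
- move: (@lip f df b a M (ltW ab)) => h.
  rewrite [`|f b - f a|]distrC [`|b - a|]distrC (ger0_norm (_ : 0 <= a - b)); last by rewrite subr_ge0 ltW.
  apply: h.
  + by move=> x hx; apply: hd; rewrite ge_min le_max; move/andP: hx => [-> ->]; rewrite ?orbT.
  + by move=> x hx; apply: hM; rewrite ge_min le_max; move/andP: hx => [-> ->]; rewrite ?orbT.
Qed.

Lemma bound_on (f : R -> R) (L : R) : 0 <= L ->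
  (forall t, `|t| <= L -> {for t, continuous f}) ->
  exists M, 0 < M /\ forall t, `|t| <= L -> `|f t| <= M.
Proof.
move=> L0 hc.
have hc' : {within `[- L, L], continuous (fun x => `|f x|)}.
  apply: continuous_in_subspaceT => x; rewrite inE /= in_itv /= => hx.
  apply: cvg_norm; apply: hc; rewrite ler_norml; exact: hx.
have hL : - L <= L by lra.
have [m _ hm] := EVT_max hL hc'.
exists (`|f m| + 1); split; first by have := normr_ge0 (f m); lra.
move=> t ht; have : `|f t| <= `|f m| by apply: hm; rewrite in_itv /= -ler_norml.
lra.
Qed.
End Calc.


Section Vd.
Variable R : realType.
Notation vec := 'rV[R]_3.

Lemma is_derive1 (f : R -> vec) (t : R) : derivable f t 1 -> is_derive t 1 f (derive1 f t).
Proof. by move=> h; rewrite derive1E; exact: derivableP. Qed.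

Lemma coord_of (f : R -> vec) (t : R) df (i : 'I_3) :
  is_derive t 1 f df -> is_derive t 1 (fun x => f x ord0 i) (df ord0 i).
Proof.
move=> h; have hd : derivable f t 1 := @ex_derive _ _ _ _ _ _ _ h.
have := coord_is_derive i hd; rewrite derive1E (@derive_val _ _ _ _ _ _ _ h) //.
Qed.

Lemma is_deriveM' (f g : R -> R) (t df dg : R) :
  is_derive t 1 f df -> is_derive t 1 g dg ->
  is_derive t 1 (fun x => f x * g x) (f t * dg + g t * df).
Proof. move=> hf hg; exact: (is_deriveM hf hg). Qed.

Lemma is_deriveD' (f g : R -> R) (t df dg : R) :
  is_derive t 1 f df -> is_derive t 1 g dg ->
  is_derive t 1 (fun x => f x + g x) (df + dg).
Proof. move=> hf hg; exact: (is_deriveD hf hg). Qed.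

Lemma dotC (u v : vec) : dot u v = dot v u.
Proof. rewrite !dotE; ring. Qed.

Lemma is_derive_dot (u v : R -> vec) du dv (t : R) :
  is_derive t 1 u du -> is_derive t 1 v dv ->
  is_derive t 1 (fun x => dot (u x) (v x)) (dot (u t) dv + dot du (v t)).
Proof.
move=> hu hv.
have -> : (fun x => dot (u x) (v x)) = (fun x =>
   u x ord0 i0 * v x ord0 i0 + u x ord0 i1 * v x ord0 i1 + u x ord0 i2 * v x ord0 i2).
  by apply/funext => x; rewrite dotE.
have h0 := is_deriveM' (coord_of i0 hu) (coord_of i0 hv).
have h1 := is_deriveM' (coord_of i1 hu) (coord_of i1 hv).
have h2 := is_deriveM' (coord_of i2 hu) (coord_of i2 hv).
have h := is_deriveD' (is_deriveD' h0 h1) h2.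
simpl in h.
eapply is_derive_eq. exact h.
rewrite !dotE; ring.
Qed.


Lemma is_deriveB' (f g : R -> R) (t df dg : R) :
  is_derive t 1 f df -> is_derive t 1 g dg ->
  is_derive t 1 (fun x => f x - g x) (df - dg).
Proof. move=> hf hg; exact: (is_deriveB hf hg). Qed.

Lemma vec_is_derive' (f : R -> vec) (t : R) (df : vec) :
  (forall i, is_derive t 1 (fun x => f x ord0 i) (df ord0 i)) -> is_derive t 1 f df.
Proof.
move=> h; apply: is_derive_eq; first exact: (vec_is_derive h).
by apply/rowP => i; rewrite mxE.
Qed.

Lemma is_derive_cross (u v : R -> vec) du dv (t : R) :
  is_derive t 1 u du -> is_derive t 1 v dv ->
  is_derive t 1 (fun x => cross (u x) (v x)) (cross (u t) dv + cross du (v t)).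
Proof.
move=> hu hv; apply: vec_is_derive' => i.
have Hm := fun j1 j2 => is_deriveM' (coord_of j1 hu) (coord_of j2 hv).
case: (ord3_cases i) => [->|[->|->]].
- have -> : (fun x => cross (u x) (v x) ord0 i0) = (fun x => u x ord0 i1 * v x ord0 i2 - u x ord0 i2 * v x ord0 i1).
    by apply/funext => x; rewrite cross0.
  have h := is_deriveB' (Hm i1 i2) (Hm i2 i1); simpl in h.
  eapply is_derive_eq. exact h. rewrite mxE !cross0; ring.
- have -> : (fun x => cross (u x) (v x) ord0 i1) = (fun x => u x ord0 i2 * v x ord0 i0 - u x ord0 i0 * v x ord0 i2).
    by apply/funext => x; rewrite cross1.
  have h := is_deriveB' (Hm i2 i0) (Hm i0 i2); simpl in h.
  eapply is_derive_eq. exact h. rewrite mxE !cross1; ring.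
- have -> : (fun x => cross (u x) (v x) ord0 i2) = (fun x => u x ord0 i0 * v x ord0 i1 - u x ord0 i1 * v x ord0 i0).
    by apply/funext => x; rewrite cross2.
  have h := is_deriveB' (Hm i0 i1) (Hm i1 i0); simpl in h.
  eapply is_derive_eq. exact h. rewrite mxE !cross2; ring.
Qed.

Lemma is_derive_neg (f : R -> vec) (t : R) df :
  is_derive (- t) 1 f df -> is_derive t 1 (fun x => f (- x)) (- df).
Proof.
move=> h; apply: vec_is_derive' => i.
have hi := coord_of i h.
have hn : is_derive t 1 (fun x : R => - x) (-1) := is_deriveN (is_derive_id t 1).
have hc := is_derive1_comp (f := fun y => f y ord0 i) (g := fun x : R => - x) hi hn.
simpl in hc. eapply is_derive_eq. exact hc. by rewrite mxE mulrN1.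
Qed.

End Vd.


Section Est.
Variable R : realType.
Notation vec := 'rV[R]_3.

Lemma entry_le1 (u : vec) i : dot u u = 1 -> `|u ord0 i| <= 1.
Proof.
rewrite dotE => h; rewrite ler_norml.
by case: (ord3_cases i) => [->|[->|->]]; apply/andP; split; nra.
Qed.

Lemma norm3 (a b c : R) : `|a + b + c| <= `|a| + `|b| + `|c|.
Proof.
apply: le_trans (ler_normD _ _) _; rewrite lerD2r; exact: ler_normD.
Qed.

Lemma dot_bound (a b : vec) (A Bd : R) :
  (forall i, `|a ord0 i| <= A) -> (forall i, `|b ord0 i| <= Bd) ->
  `|dot a b| <= 3 * (A * Bd).
Proof.
move=> ha hb; rewrite dotE; apply: le_trans (norm3 _ _ _) _.
have h i : `|a ord0 i * b ord0 i| <= A * Bd.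
  by rewrite normrM; apply: ler_pM => //; exact: normr_ge0.
have := h i0; have := h i1; have := h i2; lra.
Qed.

Lemma cross_bound (a b : vec) (A Bd : R) :
  (forall i, `|a ord0 i| <= A) -> (forall i, `|b ord0 i| <= Bd) ->
  forall i, `|cross a b ord0 i| <= 2 * (A * Bd).
Proof.
move=> ha hb.
have h i j : `|a ord0 i * b ord0 j| <= A * Bd.
  by rewrite normrM; apply: ler_pM => //; exact: normr_ge0.
have hB (x y : R) : `|x - y| <= `|x| + `|y| by apply: le_trans (ler_normB _ _) _.
move=> i; case: (ord3_cases i) => [->|[->|->]]; [rewrite cross0|rewrite cross1|rewrite cross2];
  apply: le_trans (hB _ _) _; [have := h i1 i2; have := h i2 i1 | have := h i2 i0; have := h i0 i2
  | have := h i0 i1; have := h i1 i0]; lra.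
Qed.

Lemma dotBr (m a b : vec) : dot m (a - b) = dot m a - dot m b.
Proof. rewrite !dotE !mxE; ring. Qed.
Lemma dotDr (m a b : vec) : dot m (a + b) = dot m a + dot m b.
Proof. rewrite !dotE !mxE; ring. Qed.

Lemma is_derive_dotc (m : vec) (f : R -> vec) (x : R) df :
  is_derive x 1 f df -> is_derive x 1 (fun y => dot m (f y)) (dot m df).
Proof.
move=> h.
have hm : is_derive x 1 (fun _ : R => m) 0 := is_derive_cst m x 1.
have := is_derive_dot hm h; simpl => h2.
eapply is_derive_eq. exact h2. rewrite [dot 0 _]dotE !mxE; ring.
Qed.

Lemma btwI (a b y L : R) : Num.min a b <= y <= Num.max a b -> `|a| <= L -> `|b| <= L -> `|y| <= L.
Proof.
rewrite ge_min le_max !ler_norml => /andP[h1 h2] /andP[? ?] /andP[? ?].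
apply/andP; split.
- by case/orP: h1 => h; lra.
- by case/orP: h2 => h; lra.
Qed.

Lemma btw_ab (a b x : R) : a <= b -> (Num.min a b <= x <= Num.max a b) = (a <= x <= b).
Proof.
move=> ab; rewrite ge_min le_max; apply/idP/idP.
- case/andP => /orP[h1|h1] /orP[h2|h2]; apply/andP; split; lra.
- by case/andP => h1 h2; rewrite h1 h2 orbT.
Qed.

Lemma btwD (a b y : R) : Num.min a b <= y <= Num.max a b -> `|y - a| <= `|b - a|.
Proof.
rewrite ge_min le_max => /andP[h1 h2].
have n1 := ler_norm (b - a); have n2 := ler_norm (a - b); rewrite distrC in n2.
rewrite ler_norml; apply/andP; split.
- by case/orP: h1 => h; case/orP: h2 => h'; lra.
- by case/orP: h1 => h; case/orP: h2 => h'; lra.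
Qed.

Lemma btw_sym (a b y : R) : (Num.min a b <= y <= Num.max a b) = (Num.min b a <= y <= Num.max b a).
Proof. by rewrite minC maxC. Qed.

Lemma btw_l (a b : R) : Num.min a b <= a <= Num.max a b.
Proof. by rewrite ge_min le_max lexx. Qed.

Lemma btw_sub (a b x y : R) : Num.min a b <= x <= Num.max a b ->
  Num.min a x <= y <= Num.max a x -> Num.min a b <= y <= Num.max a b.
Proof.
rewrite !ge_min !le_max => /andP[h1 h2] /andP[h3 h4].
apply/andP; split.
- case/orP: h3 => h; first by rewrite h.
  by case/orP: h1 => h'; [rewrite (le_trans h' h) | rewrite (le_trans h' h) orbT].
- case/orP: h4 => h; first by rewrite h.
  by case/orP: h2 => h'; [rewrite (le_trans h h') | rewrite (le_trans h h') orbT].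
Qed.

Lemma mvt_low (f df : R -> R) (a b m : R) :
  (forall x, Num.min a b <= x <= Num.max a b -> is_derive x 1 f (df x)) ->
  (forall x, Num.min a b <= x <= Num.max a b -> m <= df x) ->
  0 <= m -> m * `|b - a| <= `|f b - f a|.
Proof.
move=> hd hm m0.
wlog ab : a b hd hm / a <= b.
  move=> H; case: (leP a b) => h; first exact: H.
  rewrite distrC [`|f b - f a|]distrC; apply: H; last exact: ltW.
  - by move=> x; rewrite btw_sym; exact: hd.
  - by move=> x; rewrite btw_sym; exact: hm.
have hc : {within `[a, b], continuous f}.
  apply: derivable_within_continuous => x; rewrite in_itv /= => hx.
  apply: (@ex_derive _ _ _ _ _ _ _ (hd x _)).
  by rewrite btw_ab.
have [x hx ->] : exists2 x, x \in `[a, b] & f b - f a = df x * (b - a).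
  apply: MVT_segment => // x; rewrite in_itv /= => /andP[h1 h2].
  by apply: hd; rewrite btw_ab // !ltW.
have hx' : m <= df x by apply: hm; rewrite btw_ab //; move: hx; rewrite in_itv.
rewrite normrM (ger0_norm (_ : 0 <= b - a)); last by rewrite subr_ge0.
rewrite ler_wpM2r ?subr_ge0 //; apply: le_trans hx' (ler_norm _).
Qed.


Lemma vbound (f : R -> vec) (L : R) : 0 <= L -> (forall t, `|t| <= L -> derivable f t 1) ->
  exists M, 0 < M /\ forall t i, `|t| <= L -> `|f t ord0 i| <= M.
Proof.
move=> L0 hd.
have hb i : exists M, 0 < M /\ forall t, `|t| <= L -> `|f t ord0 i| <= M.
  by apply: bound_on => // t ht; apply: coord_cont; exact: hd.
have [M0 [h0 H0]] := hb i0; have [M1 [h1 H1]] := hb i1; have [M2 [h2 H2]] := hb i2.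
exists (M0 + M1 + M2); split; first lra.
move=> t i ht; case: (ord3_cases i) => [->|[->|->]].
- by have := H0 t ht; lra.
- by have := H1 t ht; lra.
- by have := H2 t ht; lra.
Qed.
End Est.


Section Misc.
Variable R : realType.
Notation vec := 'rV[R]_3.
Lemma dotZl (a : R) (u v : vec) : dot (a *: u) v = a * dot u v.
Proof. rewrite !dotE !mxE; ring. Qed.
Lemma dotZr (a : R) (u v : vec) : dot u (a *: v) = a * dot u v.
Proof. rewrite !dotE !mxE; ring. Qed.
Lemma dot_ge0 (u : vec) : 0 <= dot u u.
Proof. rewrite dotE; nra. Qed.

Lemma angle_facts (a : R) : 0 < `|a| < pi / 2 ->
  [/\ 0 < cos a, (0 < sin a) = (0 < a) & sin a != 0].
Proof.
move=> /andP[h1 h2].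
have hc : 0 < cos a by apply: cos_gt0_pihalf; move: h2; rewrite ltr_norml.
case: (ltP 0 a) => ha.
- have hs : 0 < sin a by apply: sin_gt0_pihalf; rewrite ha /=; move: h2; rewrite ltr_norml => /andP[].
  by split => //; rewrite ?hs // gt_eqF.
- have ha' : a < 0 by rewrite lt_neqAle ha andbT; apply/eqP => a0; move: h1; rewrite a0 normr0 ltxx.
  have hs : 0 < sin (- a).
    apply: sin_gt0_pihalf; rewrite oppr_gt0 ha' /=; move: h2; rewrite ltr_norml => /andP[] h _.
    by rewrite ltrNl.
  rewrite sinN in hs.
  by split => //; [ apply/negbTE; rewrite -leNgt; lra | rewrite lt_eqF //; lra].
Qed.
Lemma crossNl (u v : vec) : cross (- u) v = - cross u v.
Proof.
apply: vecP.
- rewrite cross0 [(- cross u v) ord0 i0]mxE cross0 !mxE; ring.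
- rewrite cross1 [(- cross u v) ord0 i1]mxE cross1 !mxE; ring.
- rewrite cross2 [(- cross u v) ord0 i2]mxE cross2 !mxE; ring.
Qed.

Lemma crossZr (a : R) (u v : vec) : cross u (a *: v) = a *: cross u v.
Proof.
apply: vecP.
- rewrite cross0 [(a *: cross u v) ord0 i0]mxE cross0 !mxE; ring.
- rewrite cross1 [(a *: cross u v) ord0 i1]mxE cross1 !mxE; ring.
- rewrite cross2 [(a *: cross u v) ord0 i2]mxE cross2 !mxE; ring.
Qed.

Lemma mulw (w : 'rV[R]_2) (u v : vec) j :
  (w *m col_mx u v) ord0 j = w ord0 (lshift 1 (ord0 : 'I_1)) * u ord0 j + w ord0 (rshift 1 (ord0 : 'I_1)) * v ord0 j.
Proof.
rewrite mxE big_ord_recl big_ord_recl big_ord0 addr0.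
have -> : lift ord0 (ord0 : 'I_1) = rshift 1 (ord0 : 'I_1) by apply/val_inj.
have -> : (ord0 : 'I_2) = lshift 1 (ord0 : 'I_1) by apply/val_inj.
congr (_ * _ + _ * _); [exact: col_mxEu | exact: col_mxEd].
Qed.

Lemma rf_of (u v m : vec) : dot m u = 0 -> dot m v != 0 -> dot u u = 1 ->
  row_free (col_mx u v).
Proof.
move=> hmu hmv huu.
rewrite -kermx_eq0; apply/eqP/row_matrixP => i; rewrite row0.
set w := row i (kermx (col_mx u v)).
have hw : w *m col_mx u v = 0 by rewrite /w -row_mul mulmx_ker row0.
set x := w ord0 (lshift 1 (ord0 : 'I_1)); set y := w ord0 (rshift 1 (ord0 : 'I_1)).
have hz j : x * u ord0 j + y * v ord0 j = 0.
  by rewrite -mulw hw mxE.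
have hy : y * dot m v = 0.
  transitivity (m ord0 i0 * (x * u ord0 i0 + y * v ord0 i0) + m ord0 i1 * (x * u ord0 i1 + y * v ord0 i1)
     + m ord0 i2 * (x * u ord0 i2 + y * v ord0 i2) - x * dot m u).
    rewrite !dotE; ring.
  by rewrite !hz hmu; ring.
have y0 : y = 0 by move/eqP: hy; rewrite mulf_eq0 (negbTE hmv) orbF => /eqP.
have hx : x ^+ 2 = 0.
  transitivity ((x * u ord0 i0 + y * v ord0 i0) ^+ 2 + (x * u ord0 i1 + y * v ord0 i1) ^+ 2
     + (x * u ord0 i2 + y * v ord0 i2) ^+ 2 + x ^+ 2 * (1 - dot u u)).
    rewrite y0 !dotE; ring.
  by rewrite !hz huu; ring.
have x0 : x = 0 by move/eqP: hx; rewrite sqrf_eq0 => /eqP.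
apply/rowP => j; rewrite [X in _ = X]mxE.
have : j = lshift 1 (ord0 : 'I_1) \/ j = rshift 1 (ord0 : 'I_1).
  case: j => [[|[|j]] hj]; [left | right | by []]; exact/val_inj.
by case=> ->; [exact: x0 | exact: y0].
Qed.
Lemma cross_anti (e a b : vec) : dot (cross e a) b = - dot (cross e b) a.
Proof. rewrite !dotE !cross0 !cross1 !cross2; ring. Qed.
End Misc.

Section Main.
Variables (R : realType) (l d : R) (c xi xis : R -> 'rV[R]_3) (al be als bes : R -> R).
Hypothesis hl : 0 < l.
Hypothesis hd : 0 < d.
Hypothesis hc : smooth_on [set s | `|s| < l / 2 + d] c.
Hypothesis hunit : forall s, `|s| < l / 2 + d -> dot (tangent c s) (tangent c s) = 1.
Hypothesis hkap : forall s, `|s| < l / 2 + d -> 0 < curvature c s.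
Hypothesis hinj : forall s t, `|s| <= l / 2 -> `|t| <= l / 2 -> c s = c t -> s = t.
Hypothesis hF : normal_form l d c xi al be.
Hypothesis hF2 : normal_form l d (fun s => c (- s)) xis als bes.
Hypothesis hsg : forall s, `|s| < l / 2 + d ->
     (0 < als s) = (0 < al s) /\
     curvature c (- s) * cos (als s) = curvature c s * cos (al s).

Local Notation Dom t := (`|(t : R)| < l / 2 + d).
Local Notation e := (tangent c).
Local Notation k := (derive1n 2 c).
Local Notation ct := (fun s => c (- s)).

Lemma domN t : Dom t -> Dom (- t).
Proof. by rewrite normrN. Qed.

Lemma dc (t : R) : Dom t -> derivable c t 1.
Proof. move=> h; have := hc (n:=0%N) h; rewrite /derive1n /=; apply. Qed.

Lemma de (t : R) : Dom t -> is_derive t 1 e (k t).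
Proof. move=> h; exact: (is_derive1 (hc (n:=1%N) h)). Qed.

Lemma dk (t : R) : Dom t -> is_derive t 1 k (derive1 k t).
Proof. move=> h; exact: (is_derive1 (hc (n:=2%N) h)). Qed.

Lemma dxi (t : R) : Dom t -> is_derive t 1 xi (derive1 xi t).
Proof. case: hF => hs _ _ _ h; exact: (is_derive1 (hs 0%N t h)). Qed.

Lemma dxis (t : R) : Dom t -> is_derive t 1 xis (derive1 xis t).
Proof. case: hF2 => hs _ _ _ h; exact: (is_derive1 (hs 0%N t h)). Qed.

Lemma ek (t : R) : Dom t -> dot (e t) (k t) = 0.
Proof.
move=> ht.
have h := is_derive_dot (de ht) (de ht).
have h0 : 'D_1 (fun x => dot (e x) (e x)) t = 'D_1 (cst (1:R)) t.
  apply: near_eq_derive; near=> x; rewrite hunit //; near: x; exact: near_dom.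
rewrite derive_cst (@derive_val _ _ _ _ _ _ _ h) [dot (k t) _]dotC in h0.
lra.
Unshelve. all: by end_near.
Qed.

Lemma kap2 (t : R) : curvature c t ^+ 2 = dot (k t) (k t).
Proof. by rewrite /curvature /vnorm sqr_sqrtr // dot_ge0. Qed.

Lemma en (t : R) : Dom t -> dot (e t) (principal_normal c t) = 0.
Proof. by move=> ht; rewrite /principal_normal dotZr ek // mulr0. Qed.

Lemma nn (t : R) : Dom t -> dot (principal_normal c t) (principal_normal c t) = 1.
Proof.
move=> ht; rewrite /principal_normal dotZl dotZr -kap2.
have := hkap ht; set x := curvature c t => hx.
by field; rewrite gt_eqF.
Qed.


Lemma tan_rev (u : R) : Dom u -> tangent ct (- u) = - e u.
Proof.
move=> hu.
have h : is_derive (- u) 1 ct (- e u).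
  apply: is_derive_neg; rewrite opprK; exact: is_derive1 (dc hu).
by rewrite /tangent derive1E (@derive_val _ _ _ _ _ _ _ h).
Qed.

Lemma k_rev (u : R) : Dom u -> derive1n 2 ct (- u) = k u.
Proof.
move=> hu.
have h1 : is_derive (- u) 1 (fun x => tangent c (- x)) (- k u).
  apply: is_derive_neg; rewrite opprK; exact: de.
have h2 := is_deriveN h1.
have h3 : is_derive (- u) 1 (fun x => - tangent c (- x)) (k u).
  eapply is_derive_eq. exact h2. by rewrite opprK.
rewrite /derive1n /= derive1E.
rewrite (@near_eq_derive _ _ _ _ (fun x => - tangent c (- x))).
  exact: (@derive_val _ _ _ _ _ _ _ h3).
near=> x.
have hx : Dom (- x) by rewrite normrN; near: x; apply: near_dom; rewrite normrN.
by have := tan_rev hx; rewrite opprK /tangent => ->.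
Unshelve. all: by end_near.
Qed.

Lemma kap_rev (u : R) : Dom u -> curvature ct (- u) = curvature c u.
Proof. by move=> hu; rewrite /curvature (k_rev hu). Qed.

Lemma n_rev (u : R) : Dom u -> principal_normal ct (- u) = principal_normal c u.
Proof. by move=> hu; rewrite /principal_normal (kap_rev hu) (k_rev hu). Qed.

Lemma B_rev (u : R) : Dom u -> binormal ct (- u) = - binormal c u.
Proof.
move=> hu; rewrite /binormal (tan_rev hu) (n_rev hu).
exact: crossNl.
Qed.

Lemma xi_dec (u : R) : Dom u -> xi u =
  comb (cos (be u)) (sin (be u) * cos (al u)) (sin (be u) * sin (al u))
       (e u) (principal_normal c u) (cross (e u) (principal_normal c u)).
Proof.
move=> hu; case: hF => _ h _ _; have [_ _ ->] := h u hu.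
by rewrite /ruling_from /comb /binormal scalerDr !scalerA addrA.
Qed.

Lemma X_dec (u : R) : Dom u -> xis (- u) =
  comb (- cos (bes (- u))) (sin (bes (- u)) * cos (als (- u)))
       (- (sin (bes (- u)) * sin (als (- u))))
       (e u) (principal_normal c u) (cross (e u) (principal_normal c u)).
Proof.
move=> hu; case: hF2 => _ h _ _; have [_ _ ->] := h (- u) (domN hu).
rewrite /ruling_from (tan_rev hu) (n_rev hu) (B_rev hu) /binormal.
by rewrite /comb scalerDr !scalerA scalerN scaleNr scalerN scaleNr addrA.
Qed.


Lemma domI (t : R) : `|t| <= l / 2 -> Dom t.
Proof. by move=> h; apply: (le_lt_trans h); rewrite ltrDl. Qed.

Lemma frame_ok (u : R) : Dom u -> [/\ dot (e u) (e u) = 1,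
   dot (e u) (principal_normal c u) = 0 &
   dot (principal_normal c u) (principal_normal c u) = 1].
Proof. by move=> hu; split; [exact: hunit | exact: en | exact: nn]. Qed.

Lemma be_facts (u : R) : Dom u -> 0 < sin (be u) /\ 0 < `|al u| < pi / 2.
Proof.
move=> hu; case: hF => _ h _ _; have [h1 h2 _] := h u hu.
by split => //; apply: sin_gt0_pi.
Qed.

Lemma bes_facts (u : R) : Dom u -> 0 < sin (bes u) /\ 0 < `|als u| < pi / 2.
Proof.
move=> hu; case: hF2 => _ h _ _; have [h1 h2 _] := h u hu.
by split => //; apply: sin_gt0_pi.
Qed.

Lemma unit_xi (u : R) : Dom u -> dot (xi u) (xi u) = 1.
Proof.
move=> hu; have [h1 h2 h3] := frame_ok hu.
rewrite (xi_dec hu) frame_dot //.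
have := cos2Dsin2 (be u); have := cos2Dsin2 (al u).
set x := cos (be u); set y := sin (be u); set z := cos (al u); set w := sin (al u).
move=> H1 H2.
transitivity (x ^+ 2 + y ^+ 2 * (z ^+ 2 + w ^+ 2)); first ring.
by rewrite H1 mulr1.
Qed.

Lemma Dval (u : R) : Dom u -> dot (cross (e u) (xi u)) (xis (- u)) =
  - (sin (be u) * sin (bes (- u))) * (cos (al u) * sin (als (- u)) + sin (al u) * cos (als (- u))).
Proof.
move=> hu; have [h1 h2 h3] := frame_ok hu.
rewrite (xi_dec hu) (X_dec hu) frame_det //; ring.
Qed.

Lemma Gval (u : R) : Dom u -> dot (xi u) (cross (e u) (k u)) =
  curvature c u * (sin (be u) * sin (al u)).
Proof.
move=> hu; have [h1 h2 h3] := frame_ok hu.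
have hk : k u = curvature c u *: principal_normal c u.
  by rewrite /principal_normal scalerA mulfV ?scale1r // gt_eqF // hkap.
rewrite hk crossZr dotZr; congr (_ * _).
have := frame_dot (cos (be u)) (sin (be u) * cos (al u)) (sin (be u) * sin (al u)) 0 0 1 h1 h2 h3.
rewrite /comb !scale0r !add0r scale1r -/(comb _ _ _ _ _ _) -(xi_dec hu) => ->; ring.
Qed.

Lemma G_facts (u : R) : Dom u ->
  (0 < dot (xi u) (cross (e u) (k u))) = (0 < al u) /\ dot (xi u) (cross (e u) (k u)) != 0.
Proof.
move=> hu; rewrite (Gval hu).
have [hb ha] := be_facts hu; have [_ hsa hsa0] := angle_facts ha.
have hk := hkap hu.
split.
- rewrite -hsa; apply/idP/idP => h.
  + by move: h; rewrite pmulr_rgt0 // pmulr_rgt0.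
  + by rewrite !mulr_gt0.
- by rewrite !mulf_neq0 // gt_eqF.
Qed.

Lemma sgn_const (s t : R) : `|s| <= l / 2 -> `|t| <= l / 2 -> (0 < al s) = (0 < al t).
Proof.
wlog st : s t / s <= t.
  move=> H hs ht; case: (leP s t) => h; first exact: H.
  by symmetry; apply: H => //; exact: ltW.
move=> hs ht.
set G := fun x => dot (xi x) (cross (e x) (k x)).
have hint x : s <= x <= t -> `|x| <= l / 2.
  move=> /andP[h1 h2]; move: hs ht; rewrite !ler_norml => /andP[? ?] /andP[? ?].
  apply/andP; split; lra.
have hcont : {within `[s, t], continuous G}.
  apply: derivable_within_continuous => x; rewrite in_itv /= => hx.
  have hx' := domI (hint x hx).
  exact: (@ex_derive _ _ _ _ _ _ _ (is_derive_dot (dxi hx') (is_derive_cross (de hx') (dk hx')))).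
have hGs : (0 < G s) = (0 < al s) by have [] := G_facts (domI hs).
have hGt : (0 < G t) = (0 < al t) by have [] := G_facts (domI ht).
have hG0 x : `|x| <= l / 2 -> G x != 0 by move=> hx; have [] := G_facts (domI hx).
clearbody G.
apply/eqP; apply: contraT => hne.
have hv : Num.min (G s) (G t) <= 0 <= Num.max (G s) (G t).
  rewrite ge_min le_max.
  have [h1|h1] := ltP 0 (G s); have [h2|h2] := ltP 0 (G t).
  - by move: hne; rewrite -hGs -hGt h1 h2.
  - by rewrite /= ?(ltW h1) ?(ltW h2) ?orbT.
  - by rewrite /= ?(ltW h1) ?(ltW h2) ?orbT.
  - by move: hne; rewrite -hGs -hGt !ltNge h1 h2.
have [x hx Gx] := IVT st hcont hv.
have hx' : s <= x <= t by move: hx; rewrite in_itv.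
by move: (hG0 x (hint x hx')); rewrite Gx eqxx.
Qed.

Lemma Dne0 (u : R) : `|u| <= l / 2 -> dot (cross (e u) (xi u)) (xis (- u)) != 0.
Proof.
move=> hu; have hu' := domI hu.
rewrite (Dval hu').
have [hb ha] := be_facts hu'; have [hb' ha'] := bes_facts (domN hu').
have [hc1 hs1 hn1] := angle_facts ha; have [hc2 hs2 hn2] := angle_facts ha'.
have hsame : (0 < sin (als (- u))) = (0 < sin (al u)).
  rewrite hs1 hs2; have [-> _] := hsg (domN hu').
  by apply: sgn_const; rewrite ?normrN.
rewrite mulf_neq0 //; first by rewrite oppr_eq0 mulf_neq0 // gt_eqF.
move: hsame hn1 hn2 hc1 hc2.
set A := sin (al u); set A' := sin (als (- u)); set C := cos (al u); set C' := cos (als (- u)).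
move=> hsame hA hA' hC hC'.
case: (ltP 0 A) => hA0.
- have hA'0 : 0 < A' by rewrite hsame.
  by rewrite gt_eqF // addr_gt0 // mulr_gt0.
- have hA1 : A < 0 by rewrite lt_neqAle hA hA0.
  have hA'0 : A' < 0.
    rewrite lt_neqAle hA' /=; rewrite leNgt hsame; apply/negP => h; lra.
  rewrite lt_eqF //; nra.
Qed.

Lemma part1 (s : R) : `|s| <= l / 2 -> row_free (col_mx (xi s) (xis (- s))).
Proof.
move=> hs; apply: (@rf_of _ _ _ (cross (e s) (xi s))).
- exact: cross_self_dot.
- exact: Dne0.
- exact: unit_xi (domI hs).
Qed.


Lemma L0 : 0 <= l / 2.
Proof. by rewrite divr_ge0 // ltW. Qed.

Lemma dom_btw (p q x : R) : `|p| <= l / 2 -> `|q| <= l / 2 -> Num.min p q <= x <= Num.max p q -> Dom x.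
Proof. by move=> hp hq hx; apply: domI; exact: btwI hx hp hq. Qed.

Lemma bK1 : exists K, 0 < K /\ forall t i, `|t| <= l / 2 -> `|k t ord0 i| <= K.
Proof. apply: vbound; first exact: L0. by move=> t ht; exact: (@ex_derive _ _ _ _ _ _ _ (dk (domI ht))). Qed.

Lemma bK2 : exists K, 0 < K /\ forall t i, `|t| <= l / 2 -> `|derive1 xi t ord0 i| <= K.
Proof.
apply: vbound; first exact: L0.
case: hF => hs _ _ _ t ht; exact: (hs 1%N t (domI ht)).
Qed.

Lemma bK3 : exists K, 0 < K /\ forall t i, `|t| <= l / 2 -> `|derive1 xis t ord0 i| <= K.
Proof.
apply: vbound; first exact: L0.
case: hF2 => hs _ _ _ t ht; exact: (hs 1%N t (domI ht)).
Qed.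

Lemma xi_lip (K2 : R) : (forall t i, `|t| <= l / 2 -> `|derive1 xi t ord0 i| <= K2) ->
  forall s u i, `|s| <= l / 2 -> `|u| <= l / 2 ->
  `|xi s ord0 i - xi u ord0 i| <= K2 * `|s - u|.
Proof.
move=> hK s u i hs hu.
apply: (@lip2 _ (fun y => xi y ord0 i) (fun y => derive1 xi y ord0 i) u s K2).
- move=> x hx; apply: coord_of; apply: dxi; exact: dom_btw hu hs hx.
- move=> x hx; apply: hK; exact: btwI hx hu hs.
Qed.

Lemma X_lip (K3 : R) : (forall t i, `|t| <= l / 2 -> `|derive1 xis t ord0 i| <= K3) ->
  forall s u i, `|s| <= l / 2 -> `|u| <= l / 2 ->
  `|xis (- s) ord0 i - xis (- u) ord0 i| <= K3 * `|s - u|.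
Proof.
move=> hK s u i hs hu.
have -> : `|s - u| = `|(- s) - (- u)| by rewrite -opprD normrN.
have hs' : `|- s| <= l / 2 by rewrite normrN.
have hu' : `|- u| <= l / 2 by rewrite normrN.
apply: (@lip2 _ (fun y => xis y ord0 i) (fun y => derive1 xis y ord0 i) (- u) (- s) K3).
- move=> x hx; apply: coord_of; apply: dxis; exact: dom_btw hu' hs' hx.
- move=> x hx; apply: hK; exact: btwI hx hu' hs'.
Qed.

Lemma taylor (K1 : R) : (forall t i, `|t| <= l / 2 -> `|k t ord0 i| <= K1) ->
  forall (m : 'rV[R]_3) (p q Mm : R), `|p| <= l / 2 -> `|q| <= l / 2 ->
  dot m (e p) = 0 -> (forall i, `|m ord0 i| <= Mm) ->
  `|dot m (c q - c p)| <= 3 * (Mm * K1) * (`|q - p| * `|q - p|).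
Proof.
move=> hK m p q Mm hp hq hmp hm.
have hpsi x : Dom x -> is_derive x 1 (fun y => dot m (e y)) (dot m (k x)).
  by move=> hx; exact: is_derive_dotc (de hx).
have hphi x : Dom x -> is_derive x 1 (fun y => dot m (c y)) (dot m (e x)).
  by move=> hx; exact: is_derive_dotc (is_derive1 (dc hx)).
have h1 x : Num.min p q <= x <= Num.max p q -> `|dot m (e x)| <= 3 * (Mm * K1) * `|q - p|.
  move=> hx; have hxI := btwI hx hp hq.
  have := @lip2 _ (fun y => dot m (e y)) (fun y => dot m (k y)) p x (3 * (Mm * K1)).
  rewrite hmp subr0 => H.
  apply: le_trans (H _ _) _.
  - by move=> y hy; apply: hpsi; exact: dom_btw hp hxI hy.
  - move=> y hy; apply: dot_bound => // i; apply: hK; exact: btwI hy hp hxI.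
  - apply: ler_wpM2l; last exact: btwD.
    have := normr_ge0 (m ord0 i0); have := hm i0; have := normr_ge0 (k p ord0 i0); have := hK p i0 hp.
    move=> a1 a2 a3 a4; apply: mulr_ge0 => //; apply: mulr_ge0; lra.
rewrite dotBr.
have -> : 3 * (Mm * K1) * (`|q - p| * `|q - p|) = 3 * (Mm * K1) * `|q - p| * `|q - p| by ring.
apply: (@lip2 _ (fun y => dot m (c y)) (fun y => dot m (e y)) p q (3 * (Mm * K1) * `|q - p|)).
- by move=> y hy; apply: hphi; exact: dom_btw hp hq hy.
- exact: h1.
Qed.

Lemma lowb (K1 : R) : (forall t i, `|t| <= l / 2 -> `|k t ord0 i| <= K1) ->
  forall p q : R, `|p| <= l / 2 -> `|q| <= l / 2 -> 6 * K1 * `|q - p| <= 1 ->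
  `|q - p| <= 2 * `|dot (e p) (c q - c p)|.
Proof.
move=> hK p q hp hq hsmall.
have he i : `|e p ord0 i| <= 1 by apply: entry_le1; exact: hunit (domI hp).
have h1 x : Num.min p q <= x <= Num.max p q -> 1 / 2 <= dot (e p) (e x).
  move=> hx; have hxI := btwI hx hp hq.
  have := @lip2 _ (fun y => dot (e p) (e y)) (fun y => dot (e p) (k y)) p x (3 * (1 * K1)).
  rewrite hunit ?(domI hp) // => H.
  have H' : `|dot (e p) (e x) - 1| <= 3 * (1 * K1) * `|x - p|.
    apply: H.
    - by move=> y hy; apply: is_derive_dotc; apply: de; exact: dom_btw hp hxI hy.
    - move=> y hy; apply: dot_bound => // i; apply: hK; exact: btwI hy hp hxI.
  have hxp := btwD hx.
  have K10 : 0 <= K1 by have := normr_ge0 (k p ord0 i0); have := hK p i0 hp; lra.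
  have : 3 * (1 * K1) * `|x - p| <= 3 * (1 * K1) * `|q - p| by apply: ler_wpM2l => //; lra.
  move: H'; rewrite ler_norml => /andP[a1 a2] a3.
  lra.
have := @mvt_low _ (fun y => dot (e p) (c y)) (fun y => dot (e p) (e y)) p q (1 / 2).
rewrite dotBr => H.
have : 1 / 2 * `|q - p| <= `|dot (e p) (c q) - dot (e p) (c p)|.
  apply: H => //.
  by move=> y hy; apply: is_derive_dotc; apply: is_derive1; apply: dc; exact: dom_btw hp hq hy.
lra.
Qed.

Definition Dfun (u : R) := dot (cross (e u) (xi u)) (xis (- u)).

Lemma bk0 : exists k0, 0 < k0 /\ forall u, `|u| <= l / 2 -> k0 <= `|Dfun u|.
Proof.
have hL : - (l / 2) <= l / 2 by have := L0; lra.
have hc' : {within `[- (l / 2), l / 2], continuous (fun u => `|Dfun u|)}.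
  apply: continuous_in_subspaceT => x; rewrite inE /= in_itv /= => hx.
  have hx' : Dom x by apply: domI; rewrite ler_norml.
  apply: cvg_norm; apply: deriv_cont.
  exact: (@ex_derive _ _ _ _ _ _ _ (is_derive_dot (is_derive_cross (de hx') (dxi hx')) (is_derive_neg (dxis (domN hx'))))).
have [m0 hm0 hmin] := EVT_min hL hc'.
have hm0' : `|m0| <= l / 2 by move: hm0; rewrite in_itv /= -ler_norml.
exists `|Dfun m0|; split; first by rewrite normr_gt0; exact: Dne0.
by move=> u hu; apply: hmin; rewrite in_itv /= -ler_norml.
Qed.


Definition fsum (p : R * R) := `|c p.1 ord0 i0 - c p.2 ord0 i0| + `|c p.1 ord0 i1 - c p.2 ord0 i1|
   + `|c p.1 ord0 i2 - c p.2 ord0 i2|.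

Lemma far (dl : R) : 0 < dl -> exists2 rho, 0 < rho &
  forall s u, `|s| <= l / 2 -> `|u| <= l / 2 -> dl <= `|s - u| -> rho <= fsum (s, u).
Proof.
move=> hdl.
set A := (`[- (l / 2), l / 2] `*` `[- (l / 2), l / 2]) `&` [set p : R * R | dl <= `|p.1 - p.2|].
have hA : compact A.
  apply: compact_closedI; first by apply: compact_setX; exact: segment_compact.
  have -> : [set p : R * R | dl <= `|p.1 - p.2|] = (fun p : R * R => `|p.1 - p.2|) @^-1` [set x | dl <= x].
    by [].
  apply: preimage_closed; last exact: closed_ge.
  move=> p _; apply: cvg_norm; apply: cvgB; [exact: cvg_fst | exact: cvg_snd].
have hcont : {within A, continuous fsum}.
  apply: continuous_in_subspaceT => p; rewrite inE => -[[/= hp1 hp2] _].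
  have hp1' : `|p.1| <= l / 2 by move: hp1; rewrite in_itv /= -ler_norml.
  have hp2' : `|p.2| <= l / 2 by move: hp2; rewrite in_itv /= -ler_norml.
  have hc1 i : {for p, continuous (fun q : R * R => c q.1 ord0 i)}.
    apply: (@continuous_comp _ _ _ fst (fun x => c x ord0 i)); [exact: cvg_fst | exact: coord_cont (dc (domI hp1'))].
  have hc2 i : {for p, continuous (fun q : R * R => c q.2 ord0 i)}.
    apply: (@continuous_comp _ _ _ snd (fun x => c x ord0 i)); [exact: cvg_snd | exact: coord_cont (dc (domI hp2'))].
  have hn i : {for p, continuous (fun q : R * R => `|c q.1 ord0 i - c q.2 ord0 i|)}.
    apply: cvg_norm; exact: (continuousB (hc1 i) (hc2 i)).
  exact: (continuousD (continuousD (hn i0) (hn i1)) (hn i2)).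
have [[p0 hp0]|hA0] := pselect (A !=set0).
- have [p1 hp1 hmin] := compact_EVT_min (ex_intro _ p0 hp0) hA hcont.
  move: (hp1); rewrite inE => -[[/= h1 h2] h3].
  have h1' : `|p1.1| <= l / 2 by move: h1; rewrite in_itv /= -ler_norml.
  have h2' : `|p1.2| <= l / 2 by move: h2; rewrite in_itv /= -ler_norml.
  exists (fsum p1).
    rewrite lt_neqAle; apply/andP; split; last by rewrite /fsum !addr_ge0.
    apply/negP => /eqP h0.
    have hz i : `|c p1.1 ord0 i - c p1.2 ord0 i| = 0.
      move: h0; rewrite /fsum.
      have := normr_ge0 (c p1.1 ord0 i0 - c p1.2 ord0 i0).
      have := normr_ge0 (c p1.1 ord0 i1 - c p1.2 ord0 i1).
      have := normr_ge0 (c p1.1 ord0 i2 - c p1.2 ord0 i2).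
      case: (ord3_cases i) => [->|[->|->]] *; lra.
    have hceq : c p1.1 = c p1.2.
      apply: vecP; apply/eqP; rewrite -subr_eq0 -normr_eq0; apply/eqP; exact: hz.
    have := hinj h1' h2' hceq => heq.
    by move: h3; rewrite /= heq subrr normr0 leNgt hdl.
  move=> s u hs hu hsu; apply: (hmin (s, u)); rewrite inE; split => //=.
  by split; rewrite in_itv /= -ler_norml.
- exists 1 => // s u hs hu hsu; exfalso; apply: hA0; exists (s, u); split => //=.
  by split; rewrite in_itv /= -ler_norml.
Qed.


Lemma unit_X (u : R) : Dom u -> dot (xis (- u)) (xis (- u)) = 1.
Proof.
move=> hu; have [h1 h2 h3] := frame_ok hu.
rewrite (X_dec hu) frame_dot //.
have := cos2Dsin2 (bes (- u)); have := cos2Dsin2 (als (- u)).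
set x := cos (bes (- u)); set y := sin (bes (- u)); set z := cos (als (- u)); set w := sin (als (- u)).
move=> H1 H2.
transitivity (x ^+ 2 + y ^+ 2 * (z ^+ 2 + w ^+ 2)); first ring.
by rewrite H1 mulr1.
Qed.

Lemma core : exists2 e0 : R, 0 < e0 & forall s u v w, `|s| <= l / 2 -> `|u| <= l / 2 ->
  `|v| < e0 -> `|w| < e0 -> c s + v *: xi s = c u + w *: xis (- u) -> v = 0.
Proof.
have [K1 [K1p hK1]] := bK1.
have [K2 [K2p hK2]] := bK2.
have [K3 [K3p hK3]] := bK3.
have [k0 [k0p hk0]] := bk0.
set C := 3 * (2 * K1).
have Cp : 0 < C by rewrite /C; lra.
set D0 := 6 * K1 + 12 * K2 / k0 + 12 * K3 / k0 + 48 * C / k0.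
have D0p : 0 < D0.
  rewrite /D0; have := divr_gt0 (_ : 0 < 12 * K2) k0p; have := divr_gt0 (_ : 0 < 12 * K3) k0p;
  have := divr_gt0 (_ : 0 < 48 * C) k0p; move=> a1 a2 a3; have := a1 ltac:(lra); have := a2 ltac:(lra);
  have := a3 ltac:(lra); lra.
set dl := D0^-1.
have dlp : 0 < dl by rewrite invr_gt0.
have [rho rhop hrho] := far dlp.
exists (rho / 6); first by lra.
move=> s u v w hs hu hv hw heq.
have hs' := domI hs; have hu' := domI hu.
have hE : c s - c u = w *: xis (- u) - v *: xi s.
  have -> : c s = c u + w *: xis (- u) - v *: xi s by rewrite -heq addrK.
  by rewrite addrAC [c u + _]addrC addrK.
have hxs i : `|xi s ord0 i| <= 1 by apply: entry_le1; exact: unit_xi.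
have hXu i : `|xis (- u) ord0 i| <= 1 by apply: entry_le1; exact: unit_X.
have heu i : `|e u ord0 i| <= 1 by apply: entry_le1; exact: hunit.
have hes i : `|e s ord0 i| <= 1 by apply: entry_le1; exact: hunit.
set t := `|s - u|.
have t0 : 0 <= t by exact: normr_ge0.
have htd : t < dl.
  rewrite ltNge; apply/negP => hge.
  have := hrho s u hs hu hge.
  have hent i : `|c s ord0 i - c u ord0 i| <= `|w| + `|v|.
    have -> : c s ord0 i - c u ord0 i = (c s - c u) ord0 i by rewrite !mxE.
    rewrite hE !mxE; apply: le_trans (ler_normB _ _) _.
    rewrite !normrM; apply: lerD.
    + by rewrite -[X in _ <= X]mulr1; apply: ler_wpM2l => //; exact: normr_ge0.
    + by rewrite -[X in _ <= X]mulr1; apply: ler_wpM2l => //; exact: normr_ge0.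
  rewrite /fsum /=; have := hent i0; have := hent i1; have := hent i2; lra.
have htD : t * D0 <= 1.
  have : t * D0 <= dl * D0 by rewrite ler_pM2r //; exact: ltW.
  by rewrite /dl mulVf // gt_eqF.
have hK2t : 0 <= 12 * K2 / k0 * t by apply: mulr_ge0 => //; apply: divr_ge0; lra.
have hK3t : 0 <= 12 * K3 / k0 * t by apply: mulr_ge0 => //; apply: divr_ge0; lra.
have hCt : 0 <= 48 * C / k0 * t by apply: mulr_ge0 => //; apply: divr_ge0; lra.
have hK1t : 0 <= 6 * K1 * t by apply: mulr_ge0 => //; lra.
have hexp : t * D0 = 6 * K1 * t + 12 * K2 / k0 * t + 12 * K3 / k0 * t + 48 * C / k0 * t.
  by rewrite /D0; ring.
have a1 : 6 * K1 * t <= 1 by lra.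
have a2 : 12 * K2 * t <= k0.
  have : 12 * K2 / k0 * t <= 1 by lra.
  by rewrite mulrAC ler_pdivrMr // mul1r.
have a3 : 12 * K3 * t <= k0.
  have : 12 * K3 / k0 * t <= 1 by lra.
  by rewrite mulrAC ler_pdivrMr // mul1r.
have a4 : 48 * C * t <= k0.
  have : 48 * C / k0 * t <= 1 by lra.
  by rewrite mulrAC ler_pdivrMr // mul1r.
set m := cross (e u) (xis (- u)).
have hm i : `|m ord0 i| <= 2 by have := cross_bound heu hXu i; rewrite mul1r mulr1.
have hTv : `|dot m (c s - c u)| <= C * (t * t).
  have := taylor hK1 hu hs (cross_self_dot' _ _) hm.
  by rewrite -/C.
have hdmv : dot m (c s - c u) = - (v * dot m (xi s)).
  by rewrite hE dotBr !dotZr cross_self_dot mulr0 sub0r.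
have hmxi : k0 / 2 <= `|dot m (xi s)|.
  have h1 : `|dot m (xi s) - dot m (xi u)| <= 3 * (2 * (K2 * t)).
    rewrite -dotBr; apply: dot_bound => // i; rewrite !mxE; exact: xi_lip.
  have h2 : dot m (xi u) = - Dfun u by rewrite /m cross_anti.
  have h3 := hk0 u hu.
  rewrite h2 in h1.
  have := ler_normB (dot m (xi s) + Dfun u) (dot m (xi s)).
  rewrite addrC addKr => h4.
  have h5 : `|dot m (xi s) + Dfun u| <= 3 * (2 * (K2 * t)) by move: h1; rewrite opprK.
  lra.
have hv' : k0 / 2 * `|v| <= C * (t * t).
  apply: le_trans hTv; rewrite hdmv normrN normrM mulrC.
  by apply: ler_wpM2l => //; exact: normr_ge0.
set m' := cross (e s) (xi s).
have hm' i : `|m' ord0 i| <= 2 by have := cross_bound hes hxs i; rewrite mul1r mulr1.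
have hTw : `|dot m' (c u - c s)| <= C * (t * t).
  have := taylor hK1 hs hu (cross_self_dot' _ _) hm'.
  by rewrite -/C distrC.
have hdmw : dot m' (c u - c s) = - (w * dot m' (xis (- u))).
  have -> : c u - c s = - (c s - c u) by rewrite opprB.
  by rewrite hE opprB dotBr !dotZr cross_self_dot mulr0 sub0r.
have hmX : k0 / 2 <= `|dot m' (xis (- u))|.
  have h1 : `|dot m' (xis (- u)) - dot m' (xis (- s))| <= 3 * (2 * (K3 * t)).
    rewrite -dotBr; apply: dot_bound => // i; rewrite !mxE.
    by rewrite /t distrC; exact: X_lip.
  have h2 : dot m' (xis (- s)) = Dfun s by [].
  have h3 := hk0 s hs.
  rewrite h2 in h1.
  have := ler_normB (dot m' (xis (- u))) (dot m' (xis (- u)) - Dfun s).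
  rewrite opprB addrC subrK => h4.
  lra.
have hw' : k0 / 2 * `|w| <= C * (t * t).
  apply: le_trans hTw; rewrite hdmw normrN normrM mulrC.
  by apply: ler_wpM2l => //; exact: normr_ge0.
have hlow : t <= 2 * `|dot (e u) (c s - c u)|.
  exact: (lowb hK1 hu hs a1).
have hdot : `|dot (e u) (c s - c u)| <= 3 * `|w| + 3 * `|v|.
  rewrite hE dotBr !dotZr; apply: le_trans (ler_normB _ _) _.
  rewrite !normrM; apply: lerD.
  - rewrite [X in _ <= X]mulrC; apply: ler_wpM2l; first exact: normr_ge0.
    by have := dot_bound heu hXu; rewrite !mulr1.
  - rewrite [X in _ <= X]mulrC; apply: ler_wpM2l; first exact: normr_ge0.
    by have := dot_bound heu hxs; rewrite !mulr1.
have hsum : k0 / 2 * t <= 6 * (2 * (C * (t * t))).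
  have h : t <= 6 * (`|v| + `|w|) by lra.
  have hk2 : 0 <= k0 / 2 by lra.
  have h' := ler_wpM2l hk2 h.
  have -> : 6 * (2 * (C * (t * t))) = 6 * (C * (t * t)) + 6 * (C * (t * t)) by ring.
  apply: (le_trans h').
  have -> : k0 / 2 * (6 * (`|v| + `|w|)) = 6 * (k0 / 2 * `|v|) + 6 * (k0 / 2 * `|w|) by ring.
  lra.
have hCt2 : 12 * (C * (t * t)) <= k0 / 4 * t.
  have : (48 * C * t) * t <= k0 * t by apply: ler_wpM2r.
  lra.
have t00 : t = 0.
  apply/eqP; rewrite eq_le t0 andbT.
  have : k0 / 2 * t <= k0 / 4 * t by lra.
  have : 0 <= k0 / 4 * t by apply: mulr_ge0 => //; lra.
  nra.
have : k0 / 2 * `|v| <= 0 by move: hv'; rewrite t00 !mulr0.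
move=> h; apply/normr0_eq0; apply/eqP; rewrite eq_le normr_ge0 andbT.
by move: h; rewrite pmulr_rle0 // divr_gt0.
Qed.


Lemma part2 : exists2 e0 : R, 0 < e0 & forall eps : R, 0 < eps -> eps < e0 ->
     [set strip c xi p.1 p.2 | p in Omega l eps]
       `&` [set strip (fun s => c (- s)) xis p.1 p.2 | p in Omega l eps]
     = [set c s | s in [set s : R | `|s| <= l / 2]].
Proof.
have [e0 e0p H] := core.
exists e0 => // eps eps0 epse.
apply/seteqP; split.
- move=> x [[p [hp1 hp2] <-] [q [hq1 hq2] hq]].
  have hv : p.2 = 0.
    apply: (H p.1 (- q.1) p.2 q.2) => //.
    + by rewrite normrN.
    + exact: lt_trans hp2 epse.
    + exact: lt_trans hq2 epse.
    + by rewrite opprK; move: hq; rewrite /strip => ->.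
  by exists p.1 => //; rewrite /strip hv scale0r addr0.
- move=> x [s hs <-]; split.
  + exists (s, 0); first by split => //=; rewrite normr0.
    by rewrite /strip /= scale0r addr0.
  + exists (- s, 0); first by split => /=; rewrite ?normrN ?normr0.
    by rewrite /strip /= opprK scale0r addr0.
Qed.

End Main.

Unset Implicit Arguments.

Theorem proposition3p4 (R : realType) (l d : R) (c xi xis : R -> 'rV[R]_3)
    (al be als bes : R -> R) :
  0 < l -> 0 < d ->
  smooth_on [set s | `|s| < l / 2 + d] c ->
  (forall s, `|s| < l / 2 + d -> dot (tangent c s) (tangent c s) = 1) ->
  (forall s, `|s| < l / 2 + d -> 0 < curvature c s) ->
  (forall s t, `|s| <= l / 2 -> `|t| <= l / 2 -> c s = c t -> s = t) ->
  normal_form l d c xi al be ->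
  (forall s t, `|s| <= l / 2 -> `|t| <= l / 2 ->
     curvature c s * cos (al s) < curvature c t) ->
  normal_form l d (fun s => c (- s)) xis als bes ->
  (forall s, `|s| < l / 2 + d ->
     (0 < als s) = (0 < al s) /\
     curvature c (- s) * cos (als s) = curvature c s * cos (al s)) ->
  (forall s, `|s| <= l / 2 -> row_free (col_mx (xi s) (xis (- s)))) /\
  (exists2 e0 : R, 0 < e0 & forall eps : R, 0 < eps -> eps < e0 ->
     [set strip c xi p.1 p.2 | p in Omega l eps]
       `&` [set strip (fun s => c (- s)) xis p.1 p.2 | p in Omega l eps]
     = [set c s | s in [set s : R | `|s| <= l / 2]]).
Proof.
move=> hl hd hc hunit hkap hinj hF hadm hF2 hsg.
split.
- by move=> s hs; exact: (part1 hd hc hunit hkap hF hF2 hsg hs).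
- exact: (part2 hl hd hc hunit hkap hinj hF hF2 hsg).
Qed.
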